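(* Let $n\geqslant 2$. For any integers $p_1,p_2$ with $2 \leqslant p_1 < p_2$ and any $\varepsilon \in (0,1)$, $\mathcal Y(\varepsilon,p_2) \subset \mathcal Y(\varepsilon,p_1)$ (proper inclusion).
   Context: For $\bm x \in \mathbb{R}^n_{\geqslant 0}$ and $p\geqslant 1$, $\|\bm x\|_p = (\sum_{i=1}^n x_i^p)^{1/p}$. Define $D_p = n^{1-1/p}-1$. Let $\Delta_n = \{\bm x \in \mathbb{R}^n_{\geqslant 0} : \sum_{i=1}^n x_i = 1\}$, and for $\varepsilon\in[0,1]$ and integer $p\geqslant 2$ let $\mathcal Y(\varepsilon,p) = \{\bm x \in \Delta_n : (1+\varepsilon D_p)\|\bm x\|_p \leqslant 1\}$. *)

(* Defs.v *)
From HB Require Import structures.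
From mathcomp Require Import all_boot all_order all_algebra.
From mathcomp Require Import all_classical all_reals all_analysis.
Set Implicit Arguments. Unset Strict Implicit. Unset Printing Implicit Defensive.
Import Order.TTheory GRing.Theory Num.Theory.
Local Open Scope ring_scope.
Local Open Scope classical_set_scope.

(* ||x||_p = (sum_i x_i^p)^(1/p), for integer p >= 1 and x >= 0 *)
Definition pnorm (R : realType) (n p : nat) (x : 'I_n -> R) : R :=
  powR (\sum_(i < n) x i ^+ p) (p%:R^-1).

Definition Dp (R : realType) (n p : nat) : R :=
  powR (n%:R) (1 - p%:R^-1) - 1.

Definition simplex (R : realType) (n : nat) : set ('I_n -> R) :=
  [set x | (forall i, 0 <= x i) /\ \sum_(i < n) x i = 1].

Definition Yset (R : realType) (n : nat) (eps : R) (p : nat) : set ('I_n -> R) :=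
  [set x | @simplex R n x /\ (1 + eps * @Dp R n p) * @pnorm R n p x <= 1].

(* Main.v *)
Require Import Defs.
From HB Require Import structures.
From mathcomp Require Import all_boot all_order all_algebra.
From mathcomp Require Import all_classical all_reals all_analysis.
From mathcomp Require Import ring lra.
Import Order.TTheory GRing.Theory Num.Theory.
Local Open Scope ring_scope.

Section Aux.
Variable R : realType.

Lemma bern (z w : R) : 0 <= z -> 0 < w -> w < 1 -> z `^ w <= w * z + (1 - w).
Proof.
move=> z0 w0 w1.
have w1' : 0 < 1 - w by rewrite subr_gt0.
have iw : 0 < w^-1 by rewrite invr_gt0.
have iw' : 0 < (1-w)^-1 by rewrite invr_gt0.
have := @conjugate_powR R (z `^ w) 1 (w^-1) ((1 - w)^-1) (powR_ge0 _ _) ler01 iw iw'.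
rewrite !invrK addrC subrK => /(_ erefl).
rewrite -powRrM mulfV; last by rewrite gt_eqF.
by rewrite powRr1 // powR1 mulr1 mul1r [z * w]mulrC.
Qed.

Lemma bern_lt (z w : R) : 0 <= z -> z != 1 -> 0 < w -> w < 1 ->
  z `^ w < w * z + (1 - w).
Proof.
move=> z0 z1 w0 w1.
set u := Num.sqrt z.
have u0 : 0 <= u by rewrite sqrtr_ge0.
have uz : z = u ^+ 2 by rewrite sqr_sqrtr.
have u1 : u != 1 by apply: contra z1 => /eqP u1; rewrite uz u1 expr1n.
have -> : z `^ w = (u `^ w) ^+ 2.
  by rewrite uz !expr2 powRM.
have h := @bern u w u0 w0 w1.
have hu : 0 < (u - 1)^+2 by rewrite exprn_even_gt0 // subr_eq0.
apply: (le_lt_trans (y := (w * u + (1 - w))^+2)).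
  rewrite ler_sqr // nnegrE ?powR_ge0 //.
  by rewrite addr_ge0 // ?mulr_ge0 // ltW // subr_gt0.
rewrite uz.
have : 0 < w * (1 - w) * (u - 1)^+2 by apply: mulr_gt0 => //; apply: mulr_gt0 => //; rewrite subr_gt0.
move=> H; rewrite -subr_gt0.
by have -> : w * u ^+ 2 + (1 - w) - (w * u + (1 - w)) ^+ 2 = w * (1 - w) * (u - 1)^+2 by ring.
Qed.

End Aux.

Section Aux2.
Variable R : realType.

Lemma holder (n p1 p2 : nat) (x : 'I_n -> R) : (2 <= p1)%N -> (p1 < p2)%N ->
  simplex x ->
  @pnorm R n p1 x <= @pnorm R n p2 x `^ ((1 - p1%:R^-1) / (1 - p2%:R^-1)).
Proof.
move=> hp1 hp12 [x0 xs].
set m := \sum_(i < n) x i ^+ p2.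
have m0 : 0 < m.
  rewrite lt0r sumr_ge0 ?andbT => [|i _]; last by rewrite exprn_ge0.
  apply/negP => /eqP /psumr_eq0P H.
  have : \sum_(i < n) x i = 0.
    apply: big1 => i _.
    have /eqP := H (fun i _ => exprn_ge0 p2 (x0 i)) i isT.
    by rewrite expf_eq0 => /andP[_ /eqP].
  by rewrite xs => /eqP; rewrite oner_eq0.
have p1r : 1 < p1%:R :> R by rewrite ltr1n.
have p2r : 1 < p2%:R :> R by rewrite ltr1n (leq_trans _ hp12)// ltnW.
set w : R := (p1%:R - 1) / (p2%:R - 1).
have w0 : 0 < w by rewrite divr_gt0 // subr_gt0.
have w1 : w < 1 by rewrite ltr_pdivrMr ?subr_gt0// mul1r ltrD2r ltr_nat.
have ey i : x i ^+ p1 = x i * (x i ^+ p2.-1) `^ w.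
  rewrite -[x i ^+ p2.-1](powR_mulrn _ (x0 i)) -powRrM.
  have -> : (p2.-1)%:R * w = (p1.-1)%:R.
    have e1 : ((p1.-1)%:R : R) = p1%:R - 1.
      by rewrite -subn1 natrB // (leq_trans _ hp1).
    have e2 : ((p2.-1)%:R : R) = p2%:R - 1.
      by rewrite -subn1 natrB // (leq_trans _ hp12) // ltnW // (leq_trans _ hp1).
    by rewrite e1 e2 /w mulrCA mulfV ?mulr1 // subr_eq0 gt_eqF.
  rewrite powR_mulrn// -exprS prednK// (leq_trans _ hp1)//.
have S1le : \sum_(i < n) x i ^+ p1 <= m `^ w.
  under eq_bigr do rewrite ey.
  have ey2 i : (x i ^+ p2.-1) `^ w = m `^ w * (x i ^+ p2.-1 / m) `^ w.
    have E : x i ^+ p2.-1 = m * (x i ^+ p2.-1 / m) by field; rewrite gt_eqF.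
    rewrite {1}E powRM //; [exact: ltW | apply: divr_ge0; [exact: exprn_ge0 | exact: ltW]].
  under eq_bigr do rewrite ey2.
  apply: (le_trans (y := \sum_(i < n) x i * (m `^ w * (w * (x i ^+ p2.-1 / m) + (1 - w))))).
    apply: ler_sum => i _; apply: ler_wpM2l => //; apply: ler_wpM2l; first exact: powR_ge0.
    apply: bern => //; apply: divr_ge0; [exact: exprn_ge0 | exact: ltW].
  have -> : \sum_(i < n) x i * (m `^ w * (w * (x i ^+ p2.-1 / m) + (1 - w)))
     = m `^ w * (w / m * \sum_(i < n) x i * x i ^+ p2.-1 + (1 - w) * \sum_(i < n) x i).
    rewrite mulrDr !mulr_sumr -big_split /=; apply: eq_bigr => i _.
    by field; rewrite gt_eqF.
  have -> : \sum_(i < n) x i * x i ^+ p2.-1 = m.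
    by apply: eq_bigr => i _; rewrite -exprS prednK// (leq_trans _ hp12)// ltnW.
  rewrite xs; have -> : w / m * m + (1 - w) * 1 = 1 by field; rewrite gt_eqF.
  by rewrite mulr1.
rewrite /pnorm.
apply: (le_trans (y := (m `^ w) `^ (p1%:R^-1))).
  apply: ge0_ler_powR => //; rewrite ?invr_ge0 ?ler0n// nnegrE ?powR_ge0 ?sumr_ge0// => i _.
  by rewrite exprn_ge0.
rewrite -!powRrM.
have -> : w * p1%:R^-1 = p2%:R^-1 * ((1 - p1%:R^-1) / (1 - p2%:R^-1)).
  have h1 : (p1%:R : R) != 0 by rewrite gt_eqF // (lt_trans ltr01).
  have h2 : (p2%:R : R) != 0 by rewrite gt_eqF // (lt_trans ltr01).
  have h3 : (p2%:R : R) - 1 != 0 by rewrite subr_eq0 gt_eqF.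
  have h4 : 1 - (p2%:R : R)^-1 != 0.
    by rewrite subr_eq0 eq_sym invr_eq1 ?unitfE // gt_eqF.
  by rewrite /w; field; rewrite h1 h2 h3.
exact: lexx.
Qed.

End Aux2.

Section Aux3.
Variable R : realType.

Lemma powR_invC (M s : R) : 0 < M -> (M^-1) `^ s = (M `^ s)^-1.
Proof.
move=> M0; rewrite -powR_inv1 ?ltW // -powRrM mulrC powRrM powR_inv1 //.
exact: powR_ge0.
Qed.

Lemma conc (c eps s : R) : 1 < c -> 0 < eps -> eps < 1 -> 0 < s -> s < 1 ->
  1 + eps * (c `^ s - 1) < (1 + eps * (c - 1)) `^ s.
Proof.
move=> c1 e0 e1 s0 s1.
set M := 1 + eps * (c - 1).
have M1 : 1 < M by rewrite /M ltrDl; apply: mulr_gt0; rewrite ?subr_gt0.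
have M0 : 0 < M by rewrite (lt_trans ltr01).
have Mc : M < c.
  rewrite /M -subr_gt0.
  have -> : c - (1 + eps * (c - 1)) = (1 - eps) * (c - 1) by ring.
  by apply: mulr_gt0; rewrite subr_gt0.
have z1 : M^-1 != 1 by rewrite invr_eq1 ?unitfE ?gt_eqF // gt_eqF.
have z2 : c / M != 1.
  apply/negP => /eqP /(congr1 (fun y => y * M)); rewrite divfK ?lt0r_neq0 // mul1r => cM.
  by move: Mc; rewrite cM ltxx.
have h1' : (M^-1) `^ s < s * M^-1 + (1 - s).
  by apply: bern_lt => //; rewrite invr_ge0 ltW.
have h2 : (c / M) `^ s < s * (c / M) + (1 - s).
  by apply: bern_lt => //; apply: divr_ge0; apply: ltW => //; rewrite (lt_trans ltr01).
rewrite powRM ?invr_ge0 ?ltW // ?(lt_trans ltr01) // !powR_invC // in h1' h2.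
set q := M `^ s in h1' h2 *.
have q0 : 0 < q by rewrite powR_gt0.
have key : (1 - eps) * q^-1 + eps * (c `^ s * q^-1) < 1.
  have : (1 - eps) * q^-1 + eps * (c `^ s * q^-1) <
         (1 - eps) * (s * M^-1 + (1 - s)) + eps * (s * (c / M) + (1 - s)).
    apply: ltr_leD; first by rewrite ltr_pM2l // subr_gt0.
    by rewrite ler_pM2l // ltW.
  move/lt_le_trans; apply.
  have -> : (1 - eps) * (s * M^-1 + (1 - s)) + eps * (s * (c / M) + (1 - s))
     = s * ((1 - eps + eps * c) / M) + (1 - s) by field; rewrite gt_eqF.
  have -> : 1 - eps + eps * c = M by rewrite /M; ring.
  by rewrite divff ?lt0r_neq0 // mulr1 subrKC.
have E : (1 - eps) * q^-1 + eps * (c `^ s * q^-1) = (1 + eps * (c `^ s - 1)) / q by ring.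
by move: key; rewrite E ltr_pdivrMr // mul1r.
Qed.

End Aux3.

Local Open Scope classical_set_scope.

Theorem theorem2 (R : realType) (n : nat) (hn : (2 <= n)%N)
  (p1 p2 : nat) (hp1 : (2 <= p1)%N) (hp12 : (p1 < p2)%N)
  (eps : R) (heps0 : 0 < eps) (heps1 : eps < 1) :
  @Yset R n eps p2 `<=` @Yset R n eps p1 /\ @Yset R n eps p2 <> @Yset R n eps p1.
Proof.
have p1r : 1 < p1%:R :> R by rewrite ltr1n.
have p2r : 1 < p2%:R :> R by rewrite ltr1n (leq_trans _ hp12)// ltnW.
have p12r : p1%:R < p2%:R :> R by rewrite ltr_nat.
set r1 : R := 1 - p1%:R^-1.
set r2 : R := 1 - p2%:R^-1.
have ip1 : 0 < p1%:R^-1 :> R by rewrite invr_gt0 (lt_trans ltr01).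
have ip2 : 0 < p2%:R^-1 :> R by rewrite invr_gt0 (lt_trans ltr01).
have r10 : 0 < r1 by rewrite subr_gt0 invf_lt1 // (lt_trans ltr01).
have r12 : r1 < r2 by rewrite ltrD2l ltrN2 ltf_pV2 // ?posrE (lt_trans ltr01).
have r20 : 0 < r2 by rewrite (lt_trans r10).
set s := r1 / r2.
have s0 : 0 < s by rewrite divr_gt0.
have s1 : s < 1 by rewrite ltr_pdivrMr // mul1r.
have P1 (t : R) : 1 `^ t = 1 by rewrite powR1.
have nr : 1 < n%:R :> R by rewrite ltr1n.
set a2 := (n%:R : R) `^ r2.
have a21 : 1 < a2.
  by rewrite /a2 -{1}(P1 r2); apply: gt0_ltr_powR => //; rewrite nnegrE ?ler01 ?ler0n.
have D1E : Dp R n p1 = a2 `^ s - 1.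
  by rewrite /Dp -powRrM /s mulrC divfK ?lt0r_neq0.
have D2E : Dp R n p2 = a2 - 1 by [].
set M := 1 + eps * (a2 - 1).
have M0 : 0 < M.
  have : 0 <= eps * (a2 - 1) by apply: mulr_ge0; rewrite ?subr_ge0 ltW.
  rewrite /M; lra.
have conc1 := @conc R a2 eps s a21 heps0 heps1 s0 s1.
rewrite -/M in conc1.
have A1 : 1 <= a2 `^ s.
  rewrite -[X in X <= _](P1 s); apply: (ge0_ler_powR (ltW s0)); rewrite ?nnegrE ?ler01 ?ltW //.
  exact: (lt_trans ltr01).
set K := 1 + eps * (a2 `^ s - 1).
have K0 : 0 < K.
  have : 0 <= eps * (a2 `^ s - 1) by apply: mulr_ge0; rewrite ?subr_ge0 // ltW.
  rewrite /K; lra.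
split.
  move=> x [sx]; rewrite D2E -/M => hx; split => //; rewrite D1E -/K.
  have hN := @holder R n p1 p2 x hp1 hp12 sx.
  rewrite -/r1 -/r2 -/s in hN.
  have N2 : pnorm p2 x <= M^-1 by rewrite -[M^-1]mulr1 ler_pdivlMl.
  apply: (le_trans (y := K * (M `^ s)^-1)); last first.
    by rewrite ler_pdivrMr ?powR_gt0 // mul1r ltW.
  apply: ler_wpM2l; first exact: ltW.
  apply: (le_trans hN); rewrite -powR_invC //.
  apply: (ge0_ler_powR (ltW s0)) => //; rewrite nnegrE ?powR_ge0 // invr_ge0 ltW //.
move=> Heq.
have n0 : (0 < n)%N by rewrite (leq_trans _ hn).
pose i0 : 'I_n := Ordinal n0.
rewrite -/K in conc1.
set B1 := K^-1.
have B10 : 0 < B1 by rewrite invr_gt0.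
have K1 : 1 <= K.
  have : 0 <= eps * (a2 `^ s - 1) by apply: mulr_ge0; rewrite ?subr_ge0 // ltW.
  rewrite /K; lra.
have B11 : B1 <= 1 by rewrite /B1 invf_le1.
set L := B1 `^ s^-1.
have L0 : 0 <= L by exact: powR_ge0.
have L1 : L <= 1.
  have si : 0 <= s^-1 by rewrite invr_ge0 ltW.
  have h := @ge0_ler_powR R (s^-1) si B1 1 (ltW B10) ler01 B11.
  by move: h; rewrite P1.
have Ls : L `^ s = B1 by rewrite -powRrM mulVf ?lt0r_neq0 // powRr1 // ltW.
have ML : 1 < M * L.
  rewrite ltNge; apply/negP => h.
  have h' : L <= M^-1 by rewrite -[M^-1]mulr1 ler_pdivlMl.
  have : L `^ s <= (M^-1) `^ s.
    by apply: (ge0_ler_powR (ltW s0)) => //; rewrite nnegrE invr_ge0 ltW.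
  rewrite Ls powR_invC // /B1 lef_pV2 ?posrE ?powR_gt0 // => hh.
  by move: conc1; rewrite ltNge hh.
have LM : M^-1 < L by rewrite -[M^-1]mulr1 ltr_pdivrMl.
have Ma2 : M <= a2.
  have E : a2 - M = (1 - eps) * (a2 - 1) by rewrite /M; ring.
  have : 0 <= (1 - eps) * (a2 - 1) by apply: mulr_ge0; rewrite subr_ge0 ltW.
  rewrite -E; lra.
pose xt (t : R) (i : 'I_n) := (1 - t) * n%:R^-1 + t * (i == i0)%:R.
pose P : {poly R} := \sum_(i < n) ((1 - 'X) * (n%:R^-1)%:P + 'X * ((i == i0)%:R)%:P) ^+ p2.
have hf (t : R) : P.[t] = \sum_(i < n) xt t i ^+ p2.
  by rewrite /P horner_sum; apply: eq_bigr => i _; rewrite !hornerE.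
have sum1 (c : R) : \sum_(i < n) c * (i == i0)%:R = c.
  rewrite (bigD1 i0) //= big1 => [|j /negbTE ->]; last by rewrite mulr0.
  by rewrite mulr1 addr0.
have f1 : P.[1] = 1.
  rewrite hf (eq_bigr (fun i => 1 * (i == i0)%:R)) ?sum1 // => i _.
  rewrite /xt subrr mul0r add0r !mul1r; case: (i == i0) => /=; first by rewrite expr1n.
  by rewrite expr0n gtn_eqF // (leq_trans _ hp12) // ltnW.
have f0 : P.[0] <= L ^+ p2.
  rewrite hf /xt (eq_bigr (fun _ => (n%:R^-1) ^+ p2)); last first.
    by move=> i _; rewrite subr0 mul1r mul0r addr0.
  rewrite sumr_const card_ord.
  have nn0 : (n%:R : R) != 0 by rewrite pnatr_eq0 -lt0n.
  have E : (n%:R^-1) ^+ p2 *+ n = (a2^-1) ^+ p2 :> R.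
    have e1 : r2 * p2%:R = p2%:R - 1 by rewrite /r2; field; rewrite gt_eqF // (lt_trans ltr01).
    rewrite /a2 [RHS]exprVn -[(_ `^ r2) ^+ p2]powR_mulrn ?powR_ge0 // -powRrM e1 powRB ?nn0 ?implybT //.
    by rewrite powR_mulrn ?ler0n // powRr1 ?ler0n // invfM invrK exprVn mulr_natr.
  have a20 : 0 < a2 by exact: (lt_trans ltr01 a21).
  rewrite E; apply: lerXn2r; rewrite ?nnegrE ?invr_ge0 ?(ltW a20) //.
  by apply: (le_trans _ (ltW LM)); rewrite lef_pV2 ?posrE.
have [t t01 ft] : exists2 t, t \in `[0, 1]%R & P.[t] = L ^+ p2.
  have hc : {within `[0, 1], continuous (horner P)}.
    by apply: continuous_subspaceT => x; exact: continuous_horner.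
  have := @IVT R (horner P) 0 1 (L ^+ p2) ler01 hc.
  move=> H; apply: H.
  rewrite f1 ge_min le_max f0 /=; apply/orP; right.
  exact: (exprn_ile1 _ L0 L1).
move: t01; rewrite in_itv /= => /andP[t0 t1].
have sx : simplex (xt t).
  split.
    move=> i; rewrite /xt; apply: addr_ge0; apply: mulr_ge0; rewrite ?subr_ge0 ?invr_ge0 ?ler0n //.
  rewrite /xt big_split /= sum1 sumr_const card_ord.
  by rewrite -[(1 - t) / n%:R *+ n]mulr_natr divfK ?subrK // pnatr_eq0 -lt0n.
have N2 : pnorm p2 (xt t) = L.
  rewrite /pnorm -hf ft -powR_mulrn // -powRrM mulfV ?powRr1 //.
  by rewrite lt0r_neq0 // (lt_trans ltr01).
have Y1 : Yset eps p1 (xt t).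
  split => //; rewrite D1E -/K.
  have hN := @holder R n p1 p2 (xt t) hp1 hp12 sx.
  rewrite -/r1 -/r2 -/s N2 Ls in hN.
  by rewrite -(mulfV (lt0r_neq0 K0)) ler_wpM2l // ltW.
have : Yset eps p2 (xt t) by rewrite Heq.
case=> _; rewrite D2E -/M N2 => /(lt_le_trans ML).
by rewrite ltxx.
Qed.
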